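(* For any atomic proposition $p$, the rules $\mathsf{acl}_p$: from $\Gamma,p,p\Rightarrow\Delta$ infer $\Gamma,p\Rightarrow\Delta$, and $\mathsf{acr}_p$: from $\Gamma\Rightarrow p,p,\Delta$ infer $\Gamma\Rightarrow p,\Delta$ (with $\Gamma,\Delta$ arbitrary finite multisets of formulas) are strongly admissible in $\mathsf{Grz}_\infty+\mathsf{cut}$.
   Context: Formulas are built from $\bot$ and atoms by $\to$ and $\Box$; sequents $\Gamma\Rightarrow\Delta$ have finite multisets of formulas on each side; $\Box\Pi$ denotes $\{\Box B:B\in\Pi\}$. The calculus $\mathsf{Grz}_\infty+\mathsf{cut}$ has initial sequents $\Gamma,p\Rightarrow p,\Delta$ ($p$ atomic), $\Gamma,\bot\Rightarrow\Delta$, and rules $(\to_L)$ from $\Gamma,B\Rightarrow\Delta$ and $\Gamma\Rightarrow A,\Delta$ infer $\Gamma,A\to B\Rightarrow\Delta$; $(\to_R)$ from $\Gamma,A\Rightarrow B,\Delta$ infer $\Gamma\Rightarrow A\to B,\Delta$; $(\mathsf{refl})$ from $\Gamma,B,\Box B\Rightarrow\Delta$ infer $\Gamma,\Box B\Rightarrow\Delta$; $(\Box)$ from left premise $\Gamma,\Box\Pi\Rightarrow A,\Delta$ and right premise $\Box\Pi\Rightarrow A$ infer $\Gamma,\Box\Pi\Rightarrow\Box A,\Delta$; $(\mathsf{cut})$ from $\Gamma\Rightarrow A,\Delta$ and $\Gamma,A\Rightarrow\Delta$ infer $\Gamma\Rightarrow\Delta$. An $\infty$-proof is a possibly infinite tree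 of sequents built by these rules with leaves labelled by initial sequents, in which every infinite branch passes through a right premise of $(\Box)$ infinitely often; $\mathcal P$ is the set of all $\infty$-proofs. The $n$-fragment of an $\infty$-proof is the finite tree obtained by cutting every branch at the $n$-th (from the root) right premise of $(\Box)$; the main fragment is the $1$-fragment; the local height $|\pi|$ is the length of the longest branch of the main fragment (an $\infty$-proof consisting only of an initial sequent has height $0$). Write $\pi\sim_n\tau$ if the $n$-fragments of $\pi,\tau$ coincide, and $\pi\sim_0\tau$ always. $\mathcal P_n$ is the set of $\infty$-proofs with no application of $(\mathsf{cut})$ in their $n$-fragment, and $\mathcal P_0=\mathcal P$. A single-premise rule is strongly admissible in $\mathsf{Grz}_\infty+\mathsf{cut}$ if there is a mapping $\mathsf u:\mathcal P\to\mathcal P$ such that: (i) $\mathsf u$ is non-expansive: $\pi\sim_n\pi'$ implies $\mathsf u(\pi)\sim_n\mathsf u(\pi')$ for all $n$; (ii) $\mathsf u$ is adequate: $\pi\in\mathcal P_n$ implies $\mathsf u(\pi)\in\mathcal P_n$ for all $n$; (iii) $|\mathsf u(\pi)|\le|\pi|$ for all $\pi\in\mathcal P$; (iv) for every instance of the rule, $\mathsf u$ maps every $\infty$-proof of its premise to an $\infty$-proof of its conclusion. *)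

(* Defs.v *)
From HB Require Import structures.
From mathcomp Require Import all_boot.
From mathcomp Require Import finmap multiset.

Set Implicit Arguments.
Unset Strict Implicit.
Unset Printing Implicit Defensive.

Inductive formula : Type :=
| Bot : formula
| Atom : nat -> formula
| Imp : formula -> formula -> formula
| Box : formula -> formula.

Fixpoint formula_enc (A : formula) : GenTree.tree nat :=
  match A with
  | Bot => GenTree.Node 0 [::]
  | Atom n => GenTree.Leaf n
  | Imp B C => GenTree.Node 1 [:: formula_enc B; formula_enc C]
  | Box B => GenTree.Node 2 [:: formula_enc B]
  end.

Fixpoint formula_dec (t : GenTree.tree nat) : option formula :=
  match t with
  | GenTree.Leaf n => Some (Atom n)
  | GenTree.Node 0 [::] => Some Bot
  | GenTree.Node 1 [:: t1; t2] =>
      match formula_dec t1, formula_dec t2 with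
      | Some B, Some C => Some (Imp B C)
      | _, _ => None
      end
  | GenTree.Node 2 [:: t1] =>
      match formula_dec t1 with Some B => Some (Box B) | None => None end
  | _ => None
  end.

Lemma formula_encK : pcancel formula_enc formula_dec.
Proof. by elim=> [|n|B IHB C IHC|B IHB] //=; rewrite ?IHB ?IHC. Qed.

HB.instance Definition _ := Countable.copy formula (pcan_type formula_encK).

Local Open Scope mset_scope.

Definition sequent := ({mset formula} * {mset formula})%type.

Definition boxes (Pi : seq formula) : {mset formula} := seq_mset (map Box Pi).

Definition initial (s : sequent) : Prop :=
  (exists (p : nat) (G D : {mset formula}), s = (Atom p +` G, Atom p +` D)) \/
  (exists (G D : {mset formula}), s = (Bot +` G, D)).

Definition impR_inst (prem concl : sequent) : Prop :=
  exists G D A B, prem = (A +` G, B +` D) /\ concl = (G, Imp A B +` D).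
Definition refl_inst (prem concl : sequent) : Prop :=
  exists G D B, prem = (B +` (Box B +` G), D) /\ concl = (Box B +` G, D).

Definition impL_inst (prem1 prem2 concl : sequent) : Prop :=
  exists G D A B, prem1 = (B +` G, D) /\ prem2 = (G, A +` D)
                  /\ concl = (Imp A B +` G, D).
Definition box_inst (prem1 prem2 concl : sequent) : Prop :=
  exists G D (Pi : seq formula) A,
    prem1 = (G `+` boxes Pi, A +` D) /\ prem2 = (boxes Pi, [mset A])
    /\ concl = (G `+` boxes Pi, Box A +` D).
Definition cut_inst (prem1 prem2 concl : sequent) : Prop :=
  exists G D A, prem1 = (G, A +` D) /\ prem2 = (A +` G, D) /\ concl = (G, D).

(* ---------- Trees of sequents ----------
   A (possibly infinite) finitely branching tree is a partial map from
   addresses (sequences of child indices, read from the root) to sequents. *)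
Definition ptree := seq nat -> option sequent.

Definition defined (t : ptree) (p : seq nat) : Prop := t p <> None.

Definition node_ok (t : ptree) (p : seq nat) (s : sequent) : Prop :=
  (initial s /\ forall i, t (rcons p i) = None) \/
  (exists s0, t (rcons p 0) = Some s0 /\ (forall i, 0 < i -> t (rcons p i) = None)
              /\ (impR_inst s0 s \/ refl_inst s0 s)) \/
  (exists s0 s1, t (rcons p 0) = Some s0 /\ t (rcons p 1) = Some s1
              /\ (forall i, 1 < i -> t (rcons p i) = None)
              /\ (impL_inst s0 s1 s \/ box_inst s0 s1 s \/ cut_inst s0 s1 s)).

Definition box_node (t : ptree) (p : seq nat) : Prop :=
  exists s s0 s1, t p = Some s /\ t (rcons p 0) = Some s0 /\ t (rcons p 1) = Some s1
                  /\ box_inst s0 s1 s.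

Definition cut_node (t : ptree) (p : seq nat) : Prop :=
  exists s s0 s1, t p = Some s /\ t (rcons p 0) = Some s0 /\ t (rcons p 1) = Some s1
                  /\ cut_inst s0 s1 s.

Definition right_box_premise (t : ptree) (q : seq nat) (i : nat) : Prop :=
  i = 1 /\ box_node t q.

Definition inf_branch (t : ptree) (b : nat -> nat) : Prop :=
  forall k, defined t (mkseq b k).

Definition is_proof (t : ptree) : Prop :=
  defined t [::] /\
  (forall p i, defined t (rcons p i) -> defined t p) /\
  (forall p s, t p = Some s -> node_ok t p s) /\
  (forall b, inf_branch t b ->
     forall N, exists k, N <= k /\ right_box_premise t (mkseq b k) (b k)).

Record proof := Proof { ptree_of : ptree; proofP : is_proof ptree_of }.

Definition root (pi : proof) : option sequent := ptree_of pi [::].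

Inductive rbp_count (t : ptree) : seq nat -> nat -> Prop :=
| rbp_nil : rbp_count t [::] 0
| rbp_yes p i m : rbp_count t p m -> right_box_premise t p i ->
                  rbp_count t (rcons p i) m.+1
| rbp_no p i m : rbp_count t p m -> ~ right_box_premise t p i ->
                 rbp_count t (rcons p i) m.

Definition frag_inner (n : nat) (t : ptree) (p : seq nat) : Prop :=
  exists m, rbp_count t p m /\ m < n.

(* p is an address of the n-fragment: the root, or a child of an inner node
   (so the n-th right premises of (Box) are leaves of the fragment) *)
Definition in_frag (n : nat) (t : ptree) (p : seq nat) : Prop :=
  p = [::] \/ exists q i, p = rcons q i /\ frag_inner n t q.

Definition sim (n : nat) (pi tau : proof) : Prop :=
  n = 0 \/
  ((forall p, in_frag n (ptree_of pi) p -> ptree_of pi p = ptree_of tau p) /\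
   (forall p, in_frag n (ptree_of tau) p -> ptree_of pi p = ptree_of tau p)).

Definition P_ (n : nat) (pi : proof) : Prop :=
  forall p, frag_inner n (ptree_of pi) p -> ~ cut_node (ptree_of pi) p.

Definition height_le (pi : proof) (h : nat) : Prop :=
  forall p, defined (ptree_of pi) p -> in_frag 1 (ptree_of pi) p -> size p <= h.

Definition height_nonincr (u : proof -> proof) : Prop :=
  forall pi h, height_le pi h -> height_le (u pi) h.

Definition rule1 := sequent -> sequent -> Prop.

Definition strongly_admissible (R : rule1) : Prop :=
  exists u : proof -> proof,
    (forall n pi pi', sim n pi pi' -> sim n (u pi) (u pi')) /\
    (forall n pi, P_ n pi -> P_ n (u pi)) /\
    height_nonincr u /\
    (forall prem concl, R prem concl ->
       forall pi : proof, root pi = Some prem -> root (u pi) = Some concl).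

Definition acl (p : nat) : rule1 := fun prem concl =>
  exists G D : {mset formula},
    prem = (Atom p +` (Atom p +` G), D) /\ concl = (Atom p +` G, D).

Definition acr (p : nat) : rule1 := fun prem concl =>
  exists G D : {mset formula},
    prem = (G, Atom p +` (Atom p +` D)) /\ concl = (G, Atom p +` D).

(* Main.v *)
Require Import Defs.
From mathcomp Require Import all_boot.
From mathcomp Require Import finmap multiset.
From mathcomp Require Import zify.
From Stdlib Require Import ClassicalEpsilon Classical_Prop.

Set Implicit Arguments.
Unset Strict Implicit.
Unset Printing Implicit Defensive.
Local Open Scope mset_scope.

Lemma mB1Dn (x y : formula) (G : {mset formula}) :
  x != y -> (x +` G) `\ y = x +` (G `\ y).
Proof.
move=> h; apply/msetP=> b; rewrite msetB1E !mset1DE msetB1E.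
case: (eqVneq b y) => [->|nb]; first by rewrite eq_sym (negbTE h).
by rewrite ?subn0 ?addn0.
Qed.

Lemma mB1Dp (x y : formula) (G : {mset formula}) :
  0 < G y -> (x +` G) `\ y = x +` (G `\ y).
Proof.
move=> h; apply/msetP=> b; rewrite msetB1E !mset1DE msetB1E.
case: (eqVneq b y) => [->|nb]; first by lia.
by rewrite ?subn0 ?addn0.
Qed.

Lemma mDB1 (G B : {mset formula}) y :
  0 < G y -> (G `+` B) `\ y = (G `\ y) `+` B.
Proof.
move=> h; apply/msetP=> b; rewrite !msetE2 !msetnE.
case: (eqVneq b y) => [->|nb]; first by lia.
by rewrite ?subn0 ?addn0.
Qed.

Lemma boxes0 Pi q : boxes Pi (Atom q) = 0.
Proof.
rewrite /boxes mset_seqE; elim: Pi => //= B Pi ->.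
Qed.

Lemma neqBoxA A : Box A <> A.
Proof. by elim: A => // B IH [] /IH. Qed.

Lemma XIB a b c : impL_inst a b c -> box_inst a b c -> False.
Proof.
move=> [G [D [A [B [-> [-> ->]]]]]] [G1 [D1 [Pi [A1 [[_ _] [[_ e2] [_ e4]]]]]]].
have := congr1 (fun M : {mset formula} => M (Box A1)) e2.
rewrite e4 /= !mset1DE msetnE eqxx.
have -> : (Box A1 == A1) = false by apply/negbTE/eqP/neqBoxA.
lia.
Qed.

Lemma XCB a b c a' c' : cut_inst a b c -> box_inst a' b c' ->
  (c.1 = c'.1 \/ c.2 = c'.2) -> False.
Proof.
move=> [G [D [A [_ [-> ->]]]]] [G1 [D1 [Pi [A1 [_ [[e1 e2] ec]]]]]].
rewrite ec /= => -[h|h].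
  have := congr1 (fun M : {mset formula} => M A) e1.
  rewrite h /= !mset1DE !msetE2 eqxx /=; lia.
have := congr1 (fun M : {mset formula} => M (Box A1)) e2.
rewrite h /= !mset1DE msetnE eqxx.
have -> : (Box A1 == A1) = false by apply/negbTE/eqP/neqBoxA.
lia.
Qed.

Lemma XCI a b c : cut_inst a b c -> impL_inst a b c -> False.
Proof.
move=> [G [D [A [_ [-> ->]]]]] [G1 [D1 [A1 [B1 [_ [[e1 e2] [e3 e4]]]]]]].
have := congr1 (fun M : {mset formula} => M A1) e2.
rewrite e4 /= !mset1DE eqxx /=; lia.
Qed.

Section Side.
Variable p : nat.
Variable lft : bool.

Definition cnt (s : sequent) : nat := (if lft then s.1 else s.2) (Atom p).
Definition fs (s : sequent) : sequent :=
  if lft then (s.1 `\ Atom p, s.2) else (s.1, s.2 `\ Atom p).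

Lemma nIA A B : Imp A B != Atom p. Proof. by apply/eqP. Qed.
Lemma nBA A : Box A != Atom p. Proof. by apply/eqP. Qed.
Lemma nBotA : Bot != Atom p. Proof. by apply/eqP. Qed.

Lemma nAI A B : (Atom p == Imp A B) = false. Proof. by apply/negbTE/eqP. Qed.
Lemma nAB A : (Atom p == Box A) = false. Proof. by apply/negbTE/eqP. Qed.
Lemma nABot : (Atom p == Bot) = false. Proof. by apply/negbTE/eqP. Qed.

Ltac cnts := rewrite /cnt /fs /=; case: lft; rewrite /= ?mset1DE ?msetE2 ?msetnE ?boxes0 ?nAI ?nAB ?nABot /=.

Lemma M_impR s0 s : impR_inst s0 s -> cnt s <= cnt s0.
Proof. move=> [G [D [A [B [-> ->]]]]]; cnts; lia. Qed.
Lemma M_refl s0 s : refl_inst s0 s -> cnt s <= cnt s0.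
Proof. move=> [G [D [B [-> ->]]]]; cnts; lia. Qed.
Lemma M_impL s0 s1 s : impL_inst s0 s1 s -> cnt s <= cnt s0 /\ cnt s <= cnt s1.
Proof. move=> [G [D [A [B [-> [-> ->]]]]]]; cnts; lia. Qed.
Lemma M_box s0 s1 s : box_inst s0 s1 s -> cnt s <= cnt s0.
Proof. move=> [G [D [Pi [A [-> [_ ->]]]]]]; cnts; lia. Qed.
Lemma M_cut s0 s1 s : cut_inst s0 s1 s -> cnt s <= cnt s0 /\ cnt s <= cnt s1.
Proof. move=> [G [D [A [-> [-> ->]]]]]; cnts; lia. Qed.

Lemma F_init s : initial s -> 1 < cnt s -> initial (fs s).
Proof.
rewrite /fs /cnt; case=> [[q [G [D ->]]]|[G [D ->]]]; case: lft; rewrite /= ?mset1DE => h.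
- case: (eqVneq (Atom q) (Atom p)) => [e|ne].
    by rewrite e msetD1K; left; exists p, (G `\ Atom p), D; rewrite msetB1K // in_mset; move: h; rewrite -e eqxx /=; lia.
  by left; exists q, (G `\ Atom p), D; rewrite mB1Dn.
- case: (eqVneq (Atom q) (Atom p)) => [e|ne].
    by rewrite e msetD1K; left; exists p, G, (D `\ Atom p); rewrite msetB1K // in_mset; move: h; rewrite -e eqxx /=; lia.
  by left; exists q, G, (D `\ Atom p); rewrite mB1Dn.
- by right; exists (G `\ Atom p), D; rewrite mB1Dn // nBotA.
- by right; exists G, (D `\ Atom p).
Qed.

Ltac hs h := rewrite /= ?mset1DE ?msetE2 ?msetnE ?boxes0 ?nAI ?nAB ?nABot /= ?addn0 ?add0n in h.

Lemma F_impR s0 s : impR_inst s0 s -> 0 < cnt s -> impR_inst (fs s0) (fs s).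
Proof.
move=> [G [D [A [B [-> ->]]]]]; rewrite /cnt /fs; case: lft => /= h; hs h.
  by exists (G `\ Atom p), D, A, B; rewrite mB1Dp.
by exists G, (D `\ Atom p), A, B; rewrite mB1Dp // mB1Dn // nIA.
Qed.

Lemma F_refl s0 s : refl_inst s0 s -> 0 < cnt s -> refl_inst (fs s0) (fs s).
Proof.
move=> [G [D [B [-> ->]]]]; rewrite /cnt /fs; case: lft => /= h; hs h.
  exists (G `\ Atom p), D, B; rewrite (@mB1Dp B); last by rewrite mset1DE nAB.
  by rewrite !(@mB1Dn (Box B)) ?nBA.
by exists G, (D `\ Atom p), B.
Qed.

Lemma F_impL s0 s1 s : impL_inst s0 s1 s -> 0 < cnt s ->
  impL_inst (fs s0) (fs s1) (fs s).
Proof.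
move=> [G [D [A [B [-> [-> ->]]]]]]; rewrite /cnt /fs; case: lft => /= h; hs h.
  by exists (G `\ Atom p), D, A, B; rewrite mB1Dp // mB1Dn ?nIA.
by exists G, (D `\ Atom p), A, B; rewrite mB1Dp.
Qed.

Lemma F_cut s0 s1 s : cut_inst s0 s1 s -> 0 < cnt s ->
  cut_inst (fs s0) (fs s1) (fs s).
Proof.
move=> [G [D [A [-> [-> ->]]]]]; rewrite /cnt /fs; case: lft => /= h.
  by exists (G `\ Atom p), D, A; rewrite mB1Dp.
by exists G, (D `\ Atom p), A; rewrite mB1Dp.
Qed.

Lemma F_box s0 s1 s : box_inst s0 s1 s -> 0 < cnt s ->
  box_inst (fs s0) s1 (fs s).
Proof.
move=> [G [D [Pi [A [-> [-> ->]]]]]]; rewrite /cnt /fs; case: lft => /= h; hs h.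
  by exists (G `\ Atom p), D, Pi, A; rewrite mDB1.
by exists G, (D `\ Atom p), Pi, A; rewrite mB1Dp // mB1Dn ?nBA.
Qed.

Lemma rbp_inv t r m : rbp_count t r m -> forall q i, r = rcons q i ->
  (exists m', m = m'.+1 /\ rbp_count t q m' /\ right_box_premise t q i) \/
  (rbp_count t q m /\ ~ right_box_premise t q i).
Proof.
case=> [|r0 i0 m0 H0 Hr|r0 i0 m0 H0 Hr] q i.
- by case: q.
- by case/rcons_inj => <- <-; left; exists m0.
- by case/rcons_inj => <- <-; right.
Qed.

Lemma rbp_nil_inv t r m : rbp_count t r m -> r = [::] -> m = 0.
Proof. case=> // r0 i0 m0 _ _ /(congr1 size); by rewrite size_rcons. Qed.

Lemma rbp_uniq t q m m' : rbp_count t q m -> rbp_count t q m' -> m = m'.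
Proof.
move=> H; elim: H m' => [|r i k Hk IH Hr|r i k Hk IH Hr] m' H'.
- by rewrite (rbp_nil_inv H').
- case: (rbp_inv H' (erefl _)) => [[m'' [-> [H2 _]]]|[_ Hn]]; last by [].
  by rewrite (IH _ H2).
- case: (rbp_inv H' (erefl _)) => [[m'' [-> [H2 Hy]]]|[H2 _]]; first by [].
  exact: IH.
Qed.

Definition R t q := rbp_count t q 0.

Lemma R_rcons t q i : R t (rcons q i) -> R t q /\ ~ right_box_premise t q i.
Proof. by move=> H; case: (rbp_inv H (erefl _)) => [[m' [e _]]|]. Qed.

Lemma notR_rcons t q i : ~ R t q -> ~ R t (rcons q i).
Proof. by move=> nR /R_rcons []. Qed.

Lemma rbp_ext t t' : (forall q i, right_box_premise t q i <-> right_box_premise t' q i) ->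
  forall q m, rbp_count t q m -> rbp_count t' q m.
Proof.
move=> E q m; elim=> [|r i k Hk IH Hr|r i k Hk IH Hr]; first by constructor.
- by apply: rbp_yes => //; apply/E.
- by apply: rbp_no => // /E.
Qed.

Lemma frag_inner_rcons n t q i : frag_inner n t (rcons q i) -> frag_inner n t q.
Proof.
move=> [m [H lt]]; case: (rbp_inv H (erefl _)) => [[m' [e [H' _]]]|[H' _]].
  by exists m'; split => //; lia.
by exists m.
Qed.

Lemma frag_in n t q : frag_inner n t q -> in_frag n t q.
Proof.
case/lastP: q => [|q i] H; first by left.
by right; exists q, i; split => //; apply: frag_inner_rcons H.
Qed.

Lemma box_agree n ta tb : (forall q, in_frag n ta q -> ta q = tb q) ->
  forall q, frag_inner n ta q -> (box_node ta q <-> box_node tb q).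
Proof.
move=> A q Fq.
have e0 : ta q = tb q by apply: A; apply: frag_in.
have e1 i : ta (rcons q i) = tb (rcons q i) by apply: A; right; exists q, i.
by rewrite /box_node e0 !e1.
Qed.

Lemma agree_rbp n ta tb : (forall q, in_frag n ta q -> ta q = tb q) ->
  forall q m, rbp_count ta q m -> in_frag n ta q -> rbp_count tb q m.
Proof.
move=> A q m; elim=> [|r i k Hk IH Hr|r i k Hk IH Hr] Fi; first by constructor.
- have Fr : frag_inner n ta r.
    case: Fi => [/(congr1 size)|[q' [j [/rcons_inj [-> _] F]]]] //.
    by rewrite size_rcons.
  apply: rbp_yes; first by apply: IH; apply: frag_in.
  by case: Hr => -> /(box_agree A Fr).
- have Fr : frag_inner n ta r.
    case: Fi => [/(congr1 size)|[q' [j [/rcons_inj [-> _] F]]]] //.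
    by rewrite size_rcons.
  apply: rbp_no; first by apply: IH; apply: frag_in.
  by move=> [e /(box_agree A Fr) h]; apply: Hr (conj e h).
Qed.

Lemma in_frag_agree n ta tb : (forall q, in_frag n ta q -> ta q = tb q) ->
  forall q, in_frag n ta q -> in_frag n tb q.
Proof.
move=> A q [->|[q' [i [-> [m [Hm lt]]]]]]; first by left.
right; exists q', i; split => //; exists m; split => //.
by apply: (agree_rbp A Hm); apply: frag_in; exists m.
Qed.

Lemma node_ok_ext t1 t2 q x : (forall i, t1 (rcons q i) = t2 (rcons q i)) ->
  node_ok t1 q x -> node_ok t2 q x.
Proof.
move=> e; case=> [[h1 h2]|[[s0 [a [b c]]]|[s0 [s1 [a [b [c d]]]]]]].
- by left; split => // i; rewrite -e.
- by right; left; exists s0; rewrite -!e; split => //; split => // i hi; rewrite -e; apply: b.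
- by right; right; exists s0, s1; rewrite -!e; split => //; split => //; split => // i hi; rewrite -e; apply: c.
Qed.

Definition tr (t : ptree) : ptree := fun q =>
  if excluded_middle_informative (R t q) then omap fs (t q) else t q.

Section Tree.
Variable t : ptree.
Hypothesis Ht : is_proof t.
Hypothesis Hc : exists s, t [::] = Some s /\ 1 < cnt s.

Lemma trR q : R t q -> tr t q = omap fs (t q).
Proof. by rewrite /tr; case: excluded_middle_informative. Qed.

Lemma trN q : ~ R t q -> tr t q = t q.
Proof. by rewrite /tr; case: excluded_middle_informative. Qed.

Lemma trN_all q : ~ R t q -> tr t q = t q /\ forall i, tr t (rcons q i) = t (rcons q i).
Proof. by move=> nR; split => [|i]; apply: trN => //; apply: notR_rcons. Qed.

Lemma trR_all q : R t q -> ~ box_node t q ->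
  tr t q = omap fs (t q) /\ forall i, tr t (rcons q i) = omap fs (t (rcons q i)).
Proof.
move=> Rq nb; split => [|i]; apply: trR => //.
by apply: rbp_no => // -[_].
Qed.

Lemma tr_def q : defined (tr t) q <-> defined t q.
Proof. rewrite /defined /tr; case: (excluded_middle_informative (R t q)) => h; by case: (t q). Qed.

Lemma ok_none q s : t q = Some s -> forall i, 1 < i -> t (rcons q i) = None.
Proof.
case: Ht => [_ [_ [Hok _]]] E i hi.
case: (Hok q s E) => [[_ Hn]|[[s0 [_ [En _]]]|[s0 [s1 [_ [_ [En _]]]]]]].
- exact: Hn.
- by apply: En; lia.
- exact: En.
Qed.

Lemma inv_cnt q s : R t q -> t q = Some s -> 1 < cnt s.
Proof.
case: Ht => [_ [Hpre [Hok _]]].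
elim/last_ind: q s => [|q i IH] s.
  move=> _ E; case: (Hc) => s0 [E' h]; rewrite E' in E; by case: E => <-.
move=> /R_rcons [Rq nrbp] Ei.
have : defined t q by apply: (Hpre q i); rewrite /defined Ei.
case Eq: (t q) => [sq|]; last by move=> /(_ Eq).
move=> _; have h := IH sq Rq Eq.
case: (Hok q sq Eq) => [[_ Hn]|[[s0 [E0 [En Hr]]]|[s0 [s1 [E0 [E1 [En Hr]]]]]]].
- by rewrite Hn in Ei.
- case: i Ei nrbp => [|i] Ei _; last by rewrite En in Ei.
  rewrite E0 in Ei; case: Ei => <-.
  by case: Hr => [/M_impR|/M_refl]; lia.
- case: i Ei nrbp => [|[|i]] Ei nrbp.
  + rewrite E0 in Ei; case: Ei => <-.
    by case: Hr => [/M_impL [] |[/M_box|/M_cut []]]; intros; lia.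
  + rewrite E1 in Ei; case: Ei => <-.
    case: Hr => [/M_impL [] |[Hb|/M_cut []]]; try (intros; lia).
    by exfalso; apply: nrbp; split => //; exists sq, s0, s1.
  + by rewrite En in Ei.
Qed.

Lemma box_fwd q : box_node t q -> box_node (tr t) q.
Proof.
move=> Hb; have [s [s0 [s1 [E [E0 [E1 Hi]]]]]] := Hb.
case: (classic (R t q)) => Rq; last first.
  by case: (trN_all Rq) => e1 e2; rewrite /box_node e1 !e2; exists s, s0, s1.
exists (fs s), (fs s0), s1.
split; first by rewrite trR // E.
split; first by rewrite trR ?E0 //; apply: rbp_no => // -[].
split; first by rewrite trN ?E1 // => /R_rcons [_ []]; split.
by apply: F_box Hi _; have := inv_cnt Rq E; lia.
Qed.

Lemma box_bwd q : box_node (tr t) q -> box_node t q.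
Proof.
move=> Hb; apply: NNPP => nb.
case: (classic (R t q)) => Rq; last first.
  by apply: nb; case: (trN_all Rq) => e1 e2; move: Hb; rewrite /box_node e1 !e2.
case: (trR_all Rq nb) => e1 e2.
move: Hb => [x [x0 [x1 [E [E0 [E1 Hi]]]]]].
rewrite e1 in E; rewrite e2 in E0; rewrite e2 in E1.
case Es: (t q) E => [s|] // [Ex].
case Es0: (t (rcons q 0)) E0 => [s0|] // [Ex0].
case Es1: (t (rcons q 1)) E1 => [s1|] // [Ex1].
subst x x0 x1.
have hc : 0 < cnt s by have := inv_cnt Rq Es; lia.
case: Ht => [_ [_ [Hok _]]].
case: (Hok q s Es) => [[_ Hn]|[[s0' [_ [En _]]]|[s0' [s1' [E0 [E1 [_ Hr]]]]]]].
- by rewrite Hn in Es0.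
- by rewrite En in Es1.
- rewrite Es0 in E0; rewrite Es1 in E1; case: E0 => ee0; case: E1 => ee1; subst s0' s1'.
  case: Hr => [Hl|[Hb|Hcut]].
  + exact: XIB (F_impL Hl hc) Hi.
  + by apply: nb; exists s, s0, s1.
  + by apply: XCB (F_cut Hcut hc) Hi _; left.
Qed.

Lemma rbp_tr q i : right_box_premise (tr t) q i <-> right_box_premise t q i.
Proof. by split => -[e h]; split => //; [apply: box_bwd | apply: box_fwd]. Qed.

Lemma rbp_count_tr q m : rbp_count (tr t) q m <-> rbp_count t q m.
Proof.
split; apply: rbp_ext => q' i; [|apply: iff_sym]; exact: rbp_tr.
Qed.

Lemma frag_inner_tr n q : frag_inner n (tr t) q <-> frag_inner n t q.
Proof. by split => -[m [H lt]]; exists m; split => //; apply/rbp_count_tr. Qed.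

Lemma in_frag_tr n q : in_frag n (tr t) q <-> in_frag n t q.
Proof.
split => -[->|[q' [i [-> F]]]]; (try by left); right; exists q', i; split => //;
  by apply/frag_inner_tr.
Qed.

Lemma cut_bwd q : cut_node (tr t) q -> cut_node t q.
Proof.
move=> Hb; apply: NNPP => nc.
case: (classic (R t q)) => Rq; last first.
  by apply: nc; case: (trN_all Rq) => e1 e2; move: Hb; rewrite /cut_node e1 !e2.
move: Hb => [x [x0 [x1 [E [E0 [E1 Hi]]]]]].
case: (classic (box_node t q)) => bq.
  have [s [s0 [s1 [Es [Es0 [Es1 Hbx]]]]]] := bq.
  rewrite trR // Es in E; case: E => Ex.
  rewrite trR ?Es0 in E0; last by apply: rbp_no => // -[].
  case: E0 => Ex0.
  rewrite trN ?Es1 in E1; last by move=> /R_rcons [_ []]; split.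
  case: E1 => Ex1; subst x x0 x1.
  apply: XCB Hi Hbx _; rewrite /fs; case: lft; by [right|left].
case: (trR_all Rq bq) => e1 e2.
rewrite e1 in E; rewrite e2 in E0; rewrite e2 in E1.
case Es: (t q) E => [s|] // [Ex].
case Es0: (t (rcons q 0)) E0 => [s0|] // [Ex0].
case Es1: (t (rcons q 1)) E1 => [s1|] // [Ex1].
subst x x0 x1.
have hc : 0 < cnt s by have := inv_cnt Rq Es; lia.
case: Ht => [_ [_ [Hok _]]].
case: (Hok q s Es) => [[_ Hn]|[[s0' [_ [En _]]]|[s0' [s1' [E0 [E1 [_ Hr]]]]]]].
- by rewrite Hn in Es0.
- by rewrite En in Es1.
- rewrite Es0 in E0; rewrite Es1 in E1; case: E0 => ee0; case: E1 => ee1; subst s0' s1'.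
  case: Hr => [Hl|[Hb|Hcut]].
  + exact: XCI Hi (F_impL Hl hc).
  + by apply: bq; exists s, s0, s1.
  + by apply: nc; exists s, s0, s1.
Qed.

Lemma tr_node_ok q x : tr t q = Some x -> node_ok (tr t) q x.
Proof.
case: (Ht) => [_ [_ [Hok _]]].
case: (classic (R t q)) => Rq; last first.
  case: (trN_all Rq) => e1 e2; rewrite e1 => E.
  by apply: (node_ok_ext (t1 := t)) => [i|]; [rewrite e2 | apply: Hok].
case: (classic (box_node t q)) => bq.
  have [s [s0 [s1 [Es [Es0 [Es1 Hbx]]]]]] := bq.
  rewrite trR // Es => -[<-].
  right; right; exists (fs s0), s1.
  split; first by rewrite trR ?Es0 //; apply: rbp_no => // -[].
  split; first by rewrite trN ?Es1 // => /R_rcons [_ []]; split.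
  split.
    move=> i hi; rewrite /tr; case: (excluded_middle_informative (R t (rcons q i))) => hh;
    by rewrite (ok_none Es hi).
  by right; left; apply: F_box Hbx _; have := inv_cnt Rq Es; lia.
case: (trR_all Rq bq) => e1 e2.
rewrite e1; case Es: (t q) => [s|] // [<-].
have hc2 := inv_cnt Rq Es.
have hc : 0 < cnt s by lia.
case: (Hok q s Es) => [[Hi Hn]|[[s0 [E0 [En Hr]]]|[s0 [s1 [E0 [E1 [En Hr]]]]]]].
- by left; split; [apply: F_init | move=> i; rewrite e2 Hn].
- right; left; exists (fs s0); rewrite e2 E0; split => //; split.
    by move=> i hi; rewrite e2 En.
  by case: Hr => h; [left; apply: F_impR | right; apply: F_refl].
- right; right; exists (fs s0), (fs s1); rewrite !e2 E0 E1; split => //; split => //.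
  split; first by move=> i hi; rewrite e2 En.
  case: Hr => [Hl|[Hb|Hcut]].
  + by left; apply: F_impL.
  + by exfalso; apply: bq; exists s, s0, s1.
  + by right; right; apply: F_cut.
Qed.

Lemma tr_proof : is_proof (tr t).
Proof.
case: (Ht) => [Hr [Hpre [Hok Hinf]]].
split; first by apply/tr_def.
split; first by move=> q i /tr_def /Hpre /tr_def.
split; first exact: tr_node_ok.
move=> b Hb N.
have Hb' : inf_branch t b by move=> k; apply/tr_def/Hb.
case: (Hinf b Hb' N) => k [Hk Hr']; exists k; split => //; exact/rbp_tr.
Qed.

End Tree.

Definition cond (pi : proof) := exists s, ptree_of pi [::] = Some s /\ 1 < cnt s.

Definition u (pi : proof) : proof :=
  match excluded_middle_informative (cond pi) with
  | left H => @Proof (tr (ptree_of pi)) (@tr_proof (ptree_of pi) (proofP pi) H)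
  | right _ => pi
  end.

Lemma tr_agree n t1 t2 :
  (forall q, in_frag n t1 q -> t1 q = t2 q) ->
  (forall q, in_frag n t2 q -> t1 q = t2 q) ->
  forall q, in_frag n t1 q -> tr t1 q = tr t2 q.
Proof.
move=> A1 A2 q F1.
have A2' : forall q, in_frag n t2 q -> t2 q = t1 q by move=> q' h; rewrite A2.
have F2 := in_frag_agree A1 F1.
have e := A1 q F1.
rewrite /tr; case: (excluded_middle_informative (R t1 q)) => h1;
  case: (excluded_middle_informative (R t2 q)) => h2; rewrite e //.
- by exfalso; apply: h2; apply: (agree_rbp A1 h1 F1).
- by exfalso; apply: h1; apply: (agree_rbp A2' h2 F2).
Qed.

Lemma sa_side :
  (forall n pi pi', sim n pi pi' -> sim n (u pi) (u pi')) /\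
  (forall n pi, P_ n pi -> P_ n (u pi)) /\
  height_nonincr u /\
  (forall pi s, ptree_of pi [::] = Some s -> 1 < cnt s ->
     ptree_of (u pi) [::] = Some (fs s)).
Proof.
split.
  move=> n pi pi' [->|[H1 H2]]; first by left.
  right.
  have e0 : ptree_of pi [::] = ptree_of pi' [::] by apply: H1; left.
  have H2' : forall q, in_frag n (ptree_of pi') q -> ptree_of pi' q = ptree_of pi q
    by move=> q h; rewrite H2.
  rewrite /u; case: (excluded_middle_informative (cond pi)) => c1;
    case: (excluded_middle_informative (cond pi')) => c2 /=.
  - split => q.
      move=> /(in_frag_tr (proofP pi) c1) F1; exact: tr_agree H1 H2 q F1.
    move=> /(in_frag_tr (proofP pi') c2) F2.
    exact: tr_agree H1 H2 q (in_frag_agree H2' F2).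
  - by exfalso; apply: c2; rewrite /cond -e0.
  - by exfalso; apply: c1; rewrite /cond e0.
  - by split.
split.
  move=> n pi HP; rewrite /u; case: (excluded_middle_informative (cond pi)) => c //=.
  move=> q /(frag_inner_tr (proofP pi) c) Fq /(cut_bwd (proofP pi) c).
  exact: HP q Fq.
split.
  move=> pi h Hh; rewrite /u; case: (excluded_middle_informative (cond pi)) => c //=.
  move=> q /(tr_def (ptree_of pi)) Hd /(in_frag_tr (proofP pi) c) Hf.
  exact: Hh q Hd Hf.
move=> pi s Es hc; rewrite /u; case: (excluded_middle_informative (cond pi)) => c /=.
  by rewrite trR ?Es //; constructor.
by exfalso; apply: c; exists s.
Qed.

End Side.

Theorem lemma5p3 :
  forall p : nat, strongly_admissible (acl p) /\ strongly_admissible (acr p).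
Proof.
move=> p; split.
- have [h1 [h2 [h3 h4]]] := sa_side p true.
  exists (u p true); split => //; split => //; split => //.
  move=> prem concl [G [D [-> ->]]] pi Er.
  rewrite /Defs.root (h4 pi _ Er) /fs /= ?msetD1K //.
  by rewrite /cnt /= !mset1DE eqxx.
- have [h1 [h2 [h3 h4]]] := sa_side p false.
  exists (u p false); split => //; split => //; split => //.
  move=> prem concl [G [D [-> ->]]] pi Er.
  rewrite /Defs.root (h4 pi _ Er) /fs /= ?msetD1K //.
  by rewrite /cnt /= !mset1DE eqxx.
Qed.
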